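(* In the setting of the context, run top-$k$ constrained beam search ($k$-CBS) with beam width $B$, and let $F$ denote either its final candidate set $C_T$ or the subset $F_{(B)}\subseteq C_T$ of the (at most) $B$ pairs of $C_T$ with the largest second coordinate. Let $\mathsf{dist}\in\{\mathsf{Hamming},\mathsf{Levenshtein}\}$, $\varepsilon\ge0$, and define $$\mathrm{LB}_{\varepsilon,\mathsf{dist}}=\sum_{(\mathbf{z}_{\mathrm{pre}}\Vert\mathbf{x},\,\ell)\in F\,:\,\mathbf{x}\in\mathbb{B}^{\mathsf{dist}}_{\varepsilon}(\mathbf{z}_{\mathrm{suf}})}\exp(\ell),\quad \mathrm{covered}(F)=\sum_{(\cdot,\ell)\in F}\exp(\ell),\quad \mathrm{UB}_{\varepsilon,\mathsf{dist}}=\mathrm{LB}_{\varepsilon,\mathsf{dist}}+\bigl(1-\mathrm{covered}(F)\bigr).$$ Then $p^{\mathsf{dist}}_{\mathbf{z},\varepsilon}\le\mathrm{UB}_{\varepsilon,\mathsf{dist}}$.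
   Context: Let $\mathbb{V}$ be a finite vocabulary containing a designated end-of-sequence token EOS. A language model $\theta$ assigns to every finite token sequence (history) $\mathbf{h}$ a probability distribution $\Pr_\theta(\cdot\mid\mathbf{h})$ on $\mathbb{V}$ with $\Pr_\theta(v\mid\mathbf{h})>0$ for all $v$. For an integer $k\ge1$ and a history $\mathbf{h}$, let $S(\mathbf{h})\subseteq\mathbb{V}$ be the set of $k$ tokens with the largest values of $\Pr_\theta(\cdot\mid\mathbf{h})$ (ties broken by a fixed deterministic rule). The top-$k$ decoding distribution is $\Pr_{\theta,\phi}(v\mid\mathbf{h})=\Pr_\theta(v\mid\mathbf{h})/\sum_{u\in S(\mathbf{h})}\Pr_\theta(u\mid\mathbf{h})$ for $v\in S(\mathbf{h})$ and $0$ otherwise. Fix a prefix $\mathbf{z}_{\mathrm{pre}}\in\mathbb{V}^L$ and a target suffix $\mathbf{z}_{\mathrm{suf}}\in\mathbb{V}^T$. For $\mathbf{x}\in\mathbb{V}^T$, $\Pr_{\theta,\phi}(\mathbf{x}\mid\mathbf{z}_{\mathrm{pre}})=\prod_{t=1}^T\Pr_{\theta,\phi}(x_t\mid\mathbf{z}_{\mathrm{pre}}\Vert x_{1:t-1})$ ($\Vert$ is concatenation). For $\mathbf{b},\mathbf{c}\in\mathbb{V}^T$, $\mathsf{Hamming}(\mathbf{b},\mathbf{c})=\#\{t: b_t\ne c_t\}$ and $\mathsf{Levenshtein}(\mathbf{b},\mathbf{c})$ is the minimum number of unit-cost single-token substitutions, insertions and deletions transforming $\mathbf{b}$ into $\mathbf{c}$.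 The $\varepsilon$-ball is $\mathbb{B}^{\mathsf{dist}}_{\varepsilon}(\mathbf{z}_{\mathrm{suf}})=\{\mathbf{v}\in\mathbb{V}^T:\mathsf{dist}(\mathbf{v},\mathbf{z}_{\mathrm{suf}})\le\varepsilon\}$, and $p^{\mathsf{dist}}_{\mathbf{z},\varepsilon}=\sum_{\mathbf{v}\in\mathbb{B}^{\mathsf{dist}}_{\varepsilon}(\mathbf{z}_{\mathrm{suf}})}\Pr_{\theta,\phi}(\mathbf{v}\mid\mathbf{z}_{\mathrm{pre}})$. $k$-CBS with beam width $B$: set $L_0=\{(\mathbf{z}_{\mathrm{pre}},0)\}$. For $t=1,\dots,T$: let $C_t=\{(\mathbf{h}\Vert v,\ \ell+\log\Pr_{\theta,\phi}(v\mid\mathbf{h})):(\mathbf{h},\ell)\in L_{t-1},\ v\in S(\mathbf{h})\}$. If $t=T$, output $C_T$. If $t<T$, delete from $C_t$ every pair whose history ends in EOS, and let $L_t$ be the (at most) $B$ pairs of $C_t$ with the largest second coordinate (deterministic tie-breaking). Every pair in $C_T$ has the form $(\mathbf{z}_{\mathrm{pre}}\Vert\mathbf{x},\ell)$ with $\mathbf{x}\in\mathbb{V}^T$. *)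

(* Defs.v *)
From HB Require Import structures.
From mathcomp Require Import all_boot all_order all_algebra.
From mathcomp Require Import reals sequences exp.
Set Implicit Arguments. Unset Strict Implicit. Unset Printing Implicit Defensive.
Import Order.TTheory GRing.Theory Num.Theory.
Local Open Scope ring_scope.

Definition is_LM (V : finType) (R : realType) (P : seq V -> V -> R) : Prop :=
  (forall h v, 0 < P h v) /\ (forall h, \sum_(v : V) P h v = 1).

(* S h is a set of k tokens with the largest values of P h
   (S is a fixed function of h: a deterministic tie-breaking rule). *)
Definition is_topk (V : finType) (R : realType) (k : nat)
    (P : seq V -> V -> R) (S : seq V -> {set V}) : Prop :=
  forall h, #|S h| = k /\
    (forall u v, u \in S h -> v \notin S h -> P h v <= P h u).

Definition Pphi (V : finType) (R : realType)
    (P : seq V -> V -> R) (S : seq V -> {set V}) (h : seq V) (v : V) : R :=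
  if v \in S h then P h v / \sum_(u in S h) P h u else 0.

Definition seq_prob (V : finType) (R : realType) (T : nat)
    (P : seq V -> V -> R) (S : seq V -> {set V}) (pre : seq V)
    (x : T.-tuple V) : R :=
  \prod_(t < T) Pphi P S (pre ++ take t x) (tnth x t).

Definition hamming (V : finType) (T : nat) (b c : T.-tuple V) : nat :=
  #|[set t : 'I_T | tnth b t != tnth c t]|.

Definition edit_neighbors (V : finType) (s : seq V) : seq (seq V) :=
  [seq take i s ++ drop i.+1 s | i <- iota 0 (size s)]
  ++ [seq take p.1 s ++ p.2 :: drop p.1 s | p <- [seq (i, v) | i <- iota 0 (size s).+1, v <- enum V]]
  ++ [seq take p.1 s ++ p.2 :: drop p.1.+1 s | p <- [seq (i, v) | i <- iota 0 (size s), v <- enum V]].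

Fixpoint reach (V : finType) (n : nat) (s t : seq V) : bool :=
  match n with
  | 0 => s == t
  | n'.+1 => has (fun s' => reach n' s' t) (edit_neighbors s)
  end.

Lemma reach_cat (V : finType) m n (a b c : seq V) :
  reach m a b -> reach n b c -> reach (m + n) a c.
Proof.
elim: m a => [|m IH] a /=; first by move/eqP->.
move=> /hasP[s' Hs' Hr] Hbc; apply/hasP; exists s' => //; exact: IH.
Qed.

Lemma reach_del (V : finType) (s : seq V) : reach (size s) s [::].
Proof.
elim: s => [|x s IH] //.
change (has (fun s' => reach (size s) s' [::]) (edit_neighbors (x :: s))).
apply/hasP; exists s => //.
rewrite mem_cat; apply/orP; left; apply/mapP; exists 0%N => //.
by rewrite take0 /= drop0.
Qed.

Lemma reach_ins (V : finType) (c s : seq V) : reach (size c) s (c ++ s).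
Proof.
elim/last_ind: c s => [|c x IH] s /=; first by [].
rewrite size_rcons cat_rcons.
change (has (fun s' => reach (size c) s' (c ++ x :: s)) (edit_neighbors s)).
apply/hasP; exists (x :: s); last exact: IH.
rewrite mem_cat; apply/orP; right; rewrite mem_cat; apply/orP; left.
apply/mapP; exists (0%N, x); last by rewrite take0 drop0.
by apply/allpairsP; exists (0%N, x); split => //; rewrite mem_enum.
Qed.

Lemma reach_exists (V : finType) (s t : seq V) : exists n, reach n s t.
Proof.
exists (size s + size t)%N; apply: (reach_cat (reach_del s)).
by have := reach_ins t [::]; rewrite cats0.
Qed.

Definition levenshtein (V : finType) (b c : seq V) : nat :=
  ex_minn (reach_exists b c).

Inductive distkind := Hamming | Levenshtein.

Definition distance (V : finType) (T : nat) (d : distkind)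
    (b c : T.-tuple V) : nat :=
  match d with
  | Hamming => hamming b c
  | Levenshtein => levenshtein (tval b) (tval c)
  end.

Definition p_ball (V : finType) (R : realType) (T : nat)
    (P : seq V -> V -> R) (S : seq V -> {set V}) (pre : seq V)
    (zsuf : T.-tuple V) (d : distkind) (eps : R) : R :=
  \sum_(v : T.-tuple V | (distance d v zsuf)%:R <= eps) seq_prob P S pre v.

Definition expand (V : finType) (R : realType)
    (P : seq V -> V -> R) (S : seq V -> {set V})
    (L : seq (seq V * R)) : seq (seq V * R) :=
  flatten [seq [seq (rcons p.1 v, p.2 + ln (Pphi P S p.1 v)) | v <- enum (S p.1)]
          | p <- L].

Definition ends_in (V : finType) (EOS : V) (h : seq V) : bool :=
  (0 < size h)%N && (last EOS h == EOS).

(* Lsel consists of (at most) B pairs of C with the largest second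
   coordinate: min(B, |C|) elements of C, none smaller than a discarded one
   (any deterministic tie-breaking rule yields such a selection). *)
Definition topB (V : finType) (R : realType) (B : nat)
    (C Lsel : seq (seq V * R)) : Prop :=
  exists rest, perm_eq C (Lsel ++ rest) /\ size Lsel = minn B (size C) /\
    (forall p q, p \in Lsel -> q \in rest -> q.2 <= p.2).

Definition kcbs_output (V : finType) (R : realType) (EOS : V)
    (P : seq V -> V -> R) (S : seq V -> {set V}) (B T : nat)
    (pre : seq V) (C : seq (seq V * R)) : Prop :=
  exists Ls : nat -> seq (seq V * R),
    Ls 0%N = [:: (pre, 0)] /\
    (forall t, (0 < t < T)%N ->
       topB B [seq p <- expand P S (Ls t.-1) | ~~ ends_in EOS p.1] (Ls t)) /\
    C = expand P S (Ls T.-1).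

Definition LB (V : finType) (R : realType) (T : nat) (pre : seq V)
    (zsuf : T.-tuple V) (d : distkind) (eps : R) (F : seq (seq V * R)) : R :=
  \sum_(p <- F | [exists x : T.-tuple V,
                   (p.1 == pre ++ tval x) && ((distance d x zsuf)%:R <= eps)])
     expR p.2.

Definition covered (V : finType) (R : realType) (F : seq (seq V * R)) : R :=
  \sum_(p <- F) expR p.2.

Definition UB (V : finType) (R : realType) (T : nat) (pre : seq V)
    (zsuf : T.-tuple V) (d : distkind) (eps : R) (F : seq (seq V * R)) : R :=
  LB pre zsuf d eps F + (1 - covered F).

(* Main.v *)
Require Import Defs.
From HB Require Import structures.
From mathcomp Require Import all_boot all_order all_algebra.
From mathcomp Require Import reals sequences exp lra.
Set Implicit Arguments. Unset Strict Implicit. Unset Printing Implicit Defensive.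
Import Order.TTheory GRing.Theory Num.Theory.
Local Open Scope ring_scope.

Lemma Pphi_ge0 (V : finType) (R : realType) (P : seq V -> V -> R) (S : seq V -> {set V}) h v :
  is_LM P -> 0 <= Pphi P S h v.
Proof.
move=> [Hp _]; rewrite /Pphi; case: ifP => // _.
apply: divr_ge0; first exact: ltW.
by apply: sumr_ge0 => u _; exact: ltW.
Qed.

Lemma Pphi_gt0 (V : finType) (R : realType) (P : seq V -> V -> R) (S : seq V -> {set V}) h v :
  is_LM P -> v \in S h -> 0 < Pphi P S h v.
Proof.
move=> [Hp _] Hv; rewrite /Pphi Hv.
apply: divr_gt0; first exact: Hp.
rewrite (bigD1 v) //=; apply: ltr_wpDr; last exact: Hp.
by apply: sumr_ge0 => u _; exact: ltW.
Qed.

Lemma Pphi_sum1 (V : finType) (R : realType) (P : seq V -> V -> R) k (S : seq V -> {set V}) h :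
  is_LM P -> (0 < k)%N -> is_topk k P S -> \sum_v Pphi P S h v = 1.
Proof.
move=> LM k0 Htop; have [Hc _] := Htop h.
have [v Hv] : exists v, v \in S h by apply/card_gt0P; rewrite Hc.
have Hs : 0 < \sum_(u in S h) P h u.
  have := Pphi_gt0 LM Hv; rewrite /Pphi Hv.
  by rewrite pmulr_rgt0 ?invr_gt0 //; case: LM => Hp _; exact: Hp.
rewrite /Pphi -big_mkcond /= -mulr_suml divff //.
by rewrite gt_eqF.
Qed.

Lemma sum1 (V : finType) (R : realType) (P : seq V -> V -> R) k (S : seq V -> {set V}) n :
  is_LM P -> (0 < k)%N -> is_topk k P S -> forall h,
  \sum_(x : n.-tuple V) \prod_(t < n) Pphi P S (h ++ take t x) (tnth x t) = 1.
Proof.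
move=> LM k0 Htop; elim: n => [|n IH] h.
  under eq_bigr do rewrite big_ord0.
  by rewrite sumr_const card_tuple expn0.
pose G := fun x : (n.+1).-tuple V => \prod_(t < n.+1) Pphi P S (h ++ take t x) (tnth x t).
rewrite -/(\sum_x G x).
rewrite (reindex (fun p : V * n.-tuple V => [tuple of p.1 :: p.2])) /=; last first.
  exists (fun t : (n.+1).-tuple V => (thead t, [tuple of behead t])).
    by move=> [v x] _ /=; congr pair; apply: val_inj.
  by move=> t _; rewrite [RHS]tuple_eta.
have -> : \sum_(p : V * n.-tuple V) G [tuple of p.1 :: p.2] =
          \sum_v \sum_(x : n.-tuple V) G [tuple of v :: x].
  by rewrite pair_bigA.
rewrite -(@Pphi_sum1 _ _ P k S h LM k0 Htop); apply: eq_bigr => v _.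
rewrite -[Pphi P S h v]mulr1 -(IH (rcons h v)) mulr_sumr; apply: eq_bigr => x _.
rewrite /G big_ord_recl /= cats0 tnth0; congr (_ * _).
apply: eq_bigr => i _; rewrite tnthS add0n.
by rewrite cat_rcons.
Qed.

Definition pprob (V : finType) (R : realType) (P : seq V -> V -> R)
  (S : seq V -> {set V}) (x0 : V) (pre x : seq V) : R :=
  \prod_(0 <= i < size x) Pphi P S (pre ++ take i x) (nth x0 x i).

Lemma pprob_rcons (V : finType) (R : realType) (P : seq V -> V -> R)
  (S : seq V -> {set V}) (x0 : V) pre x v :
  pprob P S x0 pre (rcons x v) = pprob P S x0 pre x * Pphi P S (pre ++ x) v.
Proof.
rewrite /pprob size_rcons big_nat_recr //= nth_rcons ltnn eqxx -cats1 take_size_cat //.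
congr (_ * _); apply: congr_big_nat => // i Hi.
have {}Hi : (i < size x)%N := Hi; by rewrite takel_cat ?(ltnW Hi) // nth_cat Hi.
Qed.

Definition Inv (V : finType) (R : realType) (P : seq V -> V -> R)
  (S : seq V -> {set V}) (x0 : V) (pre : seq V) (L : seq (seq V * R)) n :=
  uniq (map fst L) /\ forall p, p \in L -> exists x, size x = n /\ p.1 = pre ++ x /\
     expR p.2 = pprob P S x0 pre x.

Lemma mem_expand (V : finType) (R : realType) (P : seq V -> V -> R)
  (S : seq V -> {set V}) L q :
  q \in expand P S L -> exists2 p, p \in L & exists2 v, v \in S p.1 &
     q = (rcons p.1 v, p.2 + ln (Pphi P S p.1 v)).
Proof.
move=> /flatten_mapP[p Hp /mapP[v Hv ->]]; exists p => //; exists v => //.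
by rewrite mem_enum in Hv.
Qed.

Lemma uniq_expand (V : finType) (R : realType) (P : seq V -> V -> R)
  (S : seq V -> {set V}) (L : seq (seq V * R)) :
  uniq (map fst L) -> uniq (map fst (expand P S L)).
Proof.
elim: L => [|p L IH] //= /andP[HpL HuL].
rewrite map_cat cat_uniq IH // andbT; apply/andP; split.
  rewrite -map_comp; rewrite map_inj_uniq ?enum_uniq //.
  by move=> v w /= E; exact: rcons_injr E.
apply/hasP => -[s /mapP[q Hq ->] /mapP[w /mapP[u _ ->] /= Hw]].
have [p' Hp' [v _ Hq']] := mem_expand Hq.
move: Hw; rewrite Hq' /= => /rcons_inj [E _].
by move: HpL; rewrite -E (map_f fst Hp').
Qed.

Lemma expand_inv (V : finType) (R : realType) (P : seq V -> V -> R)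
  (S : seq V -> {set V}) x0 pre L n :
  is_LM P -> Inv P S x0 pre L n -> Inv P S x0 pre (expand P S L) n.+1.
Proof.
move=> LM [Hu Hm]; split; first exact: uniq_expand.
move=> q /mem_expand[p Hp [v Hv ->]] /=.
have [x [Hs [E1 E2]]] := Hm p Hp.
exists (rcons x v); split; first by rewrite size_rcons Hs.
split; first by rewrite E1 rcons_cat.
rewrite expRD E2 lnK ?pprob_rcons ?E1 //.
by rewrite posrE; apply: Pphi_gt0 => //; rewrite -E1.
Qed.

Lemma sub_inv (V : finType) (R : realType) (P : seq V -> V -> R)
  (S : seq V -> {set V}) x0 pre (L L' : seq (seq V * R)) n :
  Inv P S x0 pre L n -> {subset L' <= L} -> uniq (map fst L') -> Inv P S x0 pre L' n.
Proof. by move=> [_ Hm] Hs Hu; split => // p /Hs /Hm. Qed.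

Lemma topB_inv (V : finType) (R : realType) (P : seq V -> V -> R)
  (S : seq V -> {set V}) x0 pre B (C F : seq (seq V * R)) n :
  Inv P S x0 pre C n -> topB B C F -> Inv P S x0 pre F n.
Proof.
move=> HC [rest [Hp _]]; apply: (sub_inv HC).
  by move=> p Hp'; rewrite (perm_mem Hp) mem_cat Hp'.
have := perm_uniq (perm_map fst Hp); rewrite map_cat cat_uniq.
by case: HC => -> _ /esym/andP[].
Qed.

Lemma filter_inv (V : finType) (R : realType) (P : seq V -> V -> R)
  (S : seq V -> {set V}) x0 pre (C : seq (seq V * R)) a n :
  Inv P S x0 pre C n -> Inv P S x0 pre (filter a C) n.
Proof.
move=> HC; apply: (sub_inv HC).
  by move=> p; rewrite mem_filter => /andP[].
apply: (subseq_uniq (map_subseq _ (filter_subseq _ _))); by case: HC.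
Qed.

Lemma C_inv (V : finType) (EOS : V) (R : realType)
    (P : seq V -> V -> R) (S : seq V -> {set V})
    (B T : nat) (pre : seq V) (C : seq (seq V * R)) :
  is_LM P -> (0 < T)%N -> kcbs_output EOS P S B T pre C ->
  Inv P S EOS pre C T.
Proof.
move=> LM T0 [Ls [H0 [Hs ->]]].
have Hi : forall t, (t < T)%N -> Inv P S EOS pre (Ls t) t.
  elim=> [|t IH] Ht.
    rewrite H0; split => // p; rewrite inE => /eqP -> /=.
    exists [::]; split => //; split; first by rewrite cats0.
    by rewrite expR0 /pprob big_geq.
  have := Hs t.+1; rewrite Ht /= => /(_ isT) HB.
  apply: (topB_inv _ HB); apply: filter_inv; apply: expand_inv => //.
  by apply: IH; apply: ltnW.
rewrite -(ltn_predK T0); apply: expand_inv => //; apply: Hi.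
by rewrite -pred_Sn ltn_predL.
Qed.

Unset Implicit Arguments.

Theorem proposition2 (V : finType) (EOS : V) (R : realType)
    (P : seq V -> V -> R) (k : nat) (S : seq V -> {set V})
    (B T : nat) (pre : seq V) (zsuf : T.-tuple V)
    (d : distkind) (eps : R) (C F : seq (seq V * R)) :
  is_LM P -> (0 < k)%N -> is_topk k P S -> (0 < T)%N ->
  kcbs_output EOS P S B T pre C ->
  (F = C \/ topB B C F) ->
  0 <= eps ->
  p_ball P S pre zsuf d eps <= UB pre zsuf d eps F.
Proof.
move=> LM k0 Htop T0 Hk HF _.
have HC := C_inv LM T0 Hk.
have [HuF HmF] : Inv P S EOS pre F T.
  by case: HF => [->|]; [exact: HC | exact: topB_inv].
have sp_eq : forall x : T.-tuple V, seq_prob P S pre x = pprob P S EOS pre x.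
  move=> x; rewrite /seq_prob /pprob size_tuple big_mkord; apply: eq_bigr => i _.
  by rewrite (tnth_nth EOS).
have sp_ge0 : forall x : T.-tuple V, 0 <= seq_prob P S pre x.
  by move=> x; apply: prodr_ge0 => i _; apply: Pphi_ge0.
have tot : \sum_(x : T.-tuple V) seq_prob P S pre x = 1.
  by rewrite /seq_prob; exact: (sum1 T LM k0 Htop pre).
set ball := fun x : T.-tuple V => ((distance d x zsuf)%:R <= eps).
set Q := fun p : seq V * R => [exists x : T.-tuple V, (p.1 == pre ++ tval x) && ball x].
rewrite /UB /covered /LB [X in 1 - X](bigID Q) /=.
set A := \sum_(p <- F | Q p) expR p.2.
set Bq := \sum_(p <- F | ~~ Q p) expR p.2.
have key : Bq <= \sum_(x | ~~ ball x) seq_prob P S pre x.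
  have -> : Bq = \sum_(p <- F | ~~ Q p) \sum_(x : T.-tuple V | p.1 == pre ++ tval x) seq_prob P S pre x.
    rewrite /Bq big_seq_cond [RHS]big_seq_cond; apply: eq_bigr => p /andP[Hp _].
    have [xs [Hs [E1 E2]]] := HmF p Hp.
    have Hs' : size xs == T by rewrite Hs.
    rewrite (big_pred1 (Tuple Hs')); first by rewrite sp_eq E2.
    move=> x /=; rewrite E1 eqseq_cat // eqxx /= eq_sym.
    apply/eqP/eqP => E; last by rewrite E.
    by apply: val_inj; rewrite /= E.
  rewrite (@exchange_big_dep _ _ (@GRing.add R) _ _ F (index_enum _) (fun p => ~~ Q p) (fun p x => p.1 == pre ++ tval x) xpredT (fun _ x => seq_prob P S pre x)) //= [X in _ <= X]big_mkcond /=.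
  apply: ler_sum => x _.
  rewrite -big_filter.
  have Hsz : (size [seq p <- F | ~~ Q p & p.1 == pre ++ tval x] <= 1)%N.
    rewrite size_filter (leq_trans (sub_count (a2 := fun p => p.1 == pre ++ tval x) _ _)) //.
      by move=> p /andP[].
    by rewrite -(count_map fst (pred1 (pre ++ tval x))) count_uniq_mem ?leq_b1.
  case E : [seq p <- F | ~~ Q p & p.1 == pre ++ tval x] Hsz => [|p [|//]] _.
    by rewrite big_nil; case: ifP => // _; apply: sp_ge0.
  rewrite big_seq1; case: ifP => // Hb.
  have : p \in [seq p <- F | ~~ Q p & p.1 == pre ++ tval x] by rewrite E mem_head.
  rewrite mem_filter => /andP[/andP[/negP HQ He] _]; exfalso; apply: HQ.
  by apply/existsP; exists x; rewrite He /ball; move/negbFE: Hb.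
have : p_ball P S pre zsuf d eps + \sum_(x | ~~ ball x) seq_prob P S pre x = 1.
  by rewrite -tot [in RHS](bigID ball).
move: key; rewrite -/A; lra.
Qed.
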